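(* Let $A=\mathrm{diag}(G_1,\dots,G_m,[1])\in\mathbb{R}^{n\times n}$, $m\geq1$ (trailing block $[1]$ possibly absent), with $G_j=\begin{bmatrix}c_j&s_j\\-s_j&c_j\end{bmatrix}$, $c_j^2+s_j^2=1$, $s_j\neq 0$, $0<c_1<\cdots<c_m<1$. Let $v_0$ be a unit norm vector with $d(A,v_0)\geq 2$ and $v_0^{(1)}\neq 0$, and let $v_*$ be the limit of the sequence $\{v_k\}$ of the iteration ACI($1$) below. Then $$\min_{\alpha\in\mathbb{R}}\|A-\alpha I\|=\|A-c_1I\|=\|Av_*-c_1v_*\|=(1-c_1^2)^{1/2},$$ i.e. $v_*$ attains the value of the ideal Arnoldi problem $\min_{\alpha\in\mathbb{R}}\|A-\alpha I\|$.
   Context: Block partitioning: $v=[v^{(1)};\dots;v^{(m)};v^{(m+1)}]$ with $v^{(j)}\in\mathbb{R}^2$ for $j\leq m$ (conforming with $G_j$) and $v^{(m+1)}\in\mathbb{R}$ present only if the block $[1]$ is. ACI($1$): for $k=0,1,2,\dots$: $\widetilde w_k=(A-\alpha_kI)v_k$ with $\alpha_k=v_k^TAv_k$; $w_k=\widetilde w_k/\|\widetilde w_k\|$; $\widetilde v_{k+1}=(A^T-\beta_kI)w_k$ with $\beta_k=w_k^TAw_k$; $v_{k+1}=\widetilde v_{k+1}/\|\widetilde v_{k+1}\|$. $d(A,v)$ is the grade of $v$ w.r.t. $A$; $\|\cdot\|$ is the Euclidean vector norm and the induced spectral matrix norm. *)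

(* Defs.v *)
From HB Require Import structures.
From mathcomp Require Import all_boot all_order all_algebra.
From mathcomp Require Import all_classical all_reals all_analysis.
Set Implicit Arguments. Unset Strict Implicit. Unset Printing Implicit Defensive.
Import Order.TTheory GRing.Theory Num.Theory numFieldTopology.Exports numFieldNormedType.Exports.
Local Open Scope ring_scope.
Local Open Scope classical_set_scope.

Section Defs.
Variable R : realType.

Definition enorm (n : nat) (x : 'cV[R]_n) : R := Num.sqrt (\sum_i (x i 0) ^+ 2).

Definition opnorm (n : nat) (M : 'M[R]_n) : R :=
  sup [set r | exists x : 'cV[R]_n, enorm x = 1 /\ r = enorm (M *m x)].

Definition polyapp (n : nat) (p : {poly R}) (M : 'M[R]_n) (v : 'cV[R]_n) : 'cV[R]_n :=
  \sum_(i < size p) p`_i *: (M ^+ i *m v).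

(* d is the grade of v w.r.t. M: degree of the minimal monic polynomial p with p(M)v = 0 *)
Definition grade (n : nat) (M : 'M[R]_n) (v : 'cV[R]_n) (d : nat) : Prop :=
  (exists p : {poly R}, p \is monic /\ size p = d.+1 /\ polyapp p M v = 0) /\
  (forall p : {poly R}, p \is monic -> polyapp p M v = 0 -> (d.+1 <= size p)%N).

(* The matrix A = diag(G_1, ..., G_m, [1]) ; the trailing block [1] present iff b.
   Blocks are 0-indexed: G_{j+1} = [[c j, s j], [- s j, c j]]. *)
Definition blockA (m : nat) (b : bool) (c s : nat -> R) : 'M[R]_(2 * m + b) :=
  \matrix_(i, j)
    if ((i < 2 * m) && (j < 2 * m))%N then
      (if (i./2 == j./2)%N then
         (if (i == j :> nat) then c i./2
          else if ~~ odd i then s i./2 else - s i./2)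
       else 0)
    else (if (i == j :> nat) then 1 else 0).

Definition rayleigh (n : nat) (M : 'M[R]_n) (x : 'cV[R]_n) : R := (x^T *m M *m x) 0 0.

Definition normalize (n : nat) (x : 'cV[R]_n) : 'cV[R]_n := (enorm x)^-1 *: x.

Definition aci_step (n : nat) (M : 'M[R]_n) (v : 'cV[R]_n) : 'cV[R]_n :=
  let w := normalize ((M - (rayleigh M v)%:M) *m v) in
  normalize ((M^T - (rayleigh M w)%:M) *m w).

Definition aci_v (n : nat) (M : 'M[R]_n) (v0 : 'cV[R]_n) (k : nat) : 'cV[R]_n :=
  iter k (aci_step M) v0.

End Defs.

(* Main.v *)
Require Import Defs.
From HB Require Import structures.
From mathcomp Require Import all_boot all_order all_algebra.
From mathcomp Require Import all_classical all_reals all_analysis.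
From mathcomp Require Import zify ring lra.
Import Order.TTheory GRing.Theory Num.Theory numFieldTopology.Exports numFieldNormedType.Exports.
Local Open Scope ring_scope.
Local Open Scope classical_set_scope.
Set Implicit Arguments. Unset Strict Implicit. Unset Printing Implicit Defensive.

Lemma sum_cross0 (R : realType) n (sg : 'I_n -> 'I_n) (P : pred 'I_n) (g e x : 'I_n -> R) :
  (forall i, sg (sg i) = i) -> (forall i, P (sg i) = P i) ->
  (forall i, g (sg i) = g i) -> (forall i, e (sg i) = - e i) ->
  \sum_(i | P i) g i * e i * x i * x (sg i) = 0.
Proof.
move=> hs hP hg he.
set S := (X in X = 0).
have : S = - S.
  rewrite {1}/S (reindex_inj (h := sg)); last exact: (can_inj hs).
  rewrite -sumrN; apply: eq_big => i; first by rewrite hP.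
  by move=> _; rewrite hg he hs; ring.
move=> h; lra.
Qed.

Lemma sum_sq (R : realType) n (sg : 'I_n -> 'I_n) (P : pred 'I_n) (cc e x : 'I_n -> R) (a : R) :
  (forall i, sg (sg i) = i) -> (forall i, P (sg i) = P i) ->
  (forall i, cc (sg i) = cc i) -> (forall i, e (sg i) = - e i) ->
  (forall i, cc i ^+ 2 + e i ^+ 2 = 1) ->
  \sum_(i | P i) ((cc i - a) * x i + e i * x (sg i)) ^+ 2 =
  \sum_(i | P i) (1 - 2 * a * cc i + a ^+ 2) * x i ^+ 2.
Proof.
move=> hs hP hc he h1.
have E : forall i, ((cc i - a) * x i + e i * x (sg i)) ^+ 2 =
   (cc i - a) ^+ 2 * x i ^+ 2 + 2 * ((cc i - a) * e i * x i * x (sg i)) + e i ^+ 2 * x (sg i) ^+ 2.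
  by move=> i; ring.
rewrite (eq_bigr _ (fun i _ => E i)) !big_split /= -mulr_sumr.
rewrite (@sum_cross0 _ _ sg P (fun i => cc i - a) e x) //; last by move=> i; rewrite hc.
rewrite mulr0 addr0.
have -> : \sum_(i | P i) e i ^+ 2 * x (sg i) ^+ 2 = \sum_(i | P i) e i ^+ 2 * x i ^+ 2.
  rewrite (reindex_inj (h := sg)); last exact: (can_inj hs).
  apply: eq_big => i; first by rewrite hP.
  by move=> _; rewrite he hs sqrrN.
rewrite -big_split /=; apply: eq_bigr => i _.
have := h1 i; move=> h; rewrite -mulrDl; congr (_ * _); nra.
Qed.

Definition sgn (m i : nat) : nat := if (i < 2 * m)%N then (if odd i then i.-1 else i.+1) else i.

Lemma sgn_in (m i : nat) : (i < 2 * m)%N ->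
  [/\ (sgn m i < 2 * m)%N, (sgn m i)./2 = i./2, odd (sgn m i) = ~~ odd i, sgn m i != i &
      sgn m (sgn m i) = i].
Proof.
move=> h; rewrite /sgn h.
case: ifP => ho.
  have h1 : (i.-1 < 2 * m)%N by lia.
  rewrite h1; have -> : odd i.-1 = false by lia.
  split => //; lia.
have h1 : (i.+1 < 2 * m)%N by lia.
rewrite h1 /=; rewrite ho; split => //; lia.
Qed.

Lemma sgn_out (m i : nat) : ~~ (i < 2 * m)%N -> sgn m i = i.
Proof. by rewrite /sgn => /negbTE ->. Qed.

Lemma sgn_out' (m i : nat) : (2 * m <= i)%N -> sgn m i = i.
Proof. by move=> h; apply: sgn_out; rewrite -leqNgt. Qed.

Lemma sgn_lt m b (i : 'I_(2 * m + b)) : (sgn m i < 2 * m + b)%N.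
Proof.
case: (ltnP i (2 * m)) => h.
  by case: (sgn_in h) => h1 *; lia.
by rewrite sgn_out' ?ltn_ord.
Qed.

Definition sgo m b (i : 'I_(2 * m + b)) : 'I_(2 * m + b) := Ordinal (sgn_lt i).

Lemma sgnK m i : sgn m (sgn m i) = i.
Proof.
case: (ltnP i (2 * m)) => h; first by case: (sgn_in h).
by rewrite !sgn_out'.
Qed.

Lemma sgoK m b (i : 'I_(2 * m + b)) : sgo (sgo i) = i.
Proof. by apply: val_inj; rewrite /= sgnK. Qed.

Definition ccf (R : realType) m (c : nat -> R) (i : nat) : R :=
  if (i < 2 * m)%N then c i./2 else 1.
Definition ssf (R : realType) m (s : nat -> R) (i : nat) : R :=
  if (i < 2 * m)%N then (if odd i then - s i./2 else s i./2) else 0.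

Lemma ccf_sgn (R : realType) m (c : nat -> R) i : ccf m c (sgn m i) = ccf m c i.
Proof.
rewrite /ccf; case: (ltnP i (2 * m)) => h.
  by case: (sgn_in h) => -> -> *; rewrite ?h.
by rewrite sgn_out' // ltnNge h.
Qed.

Lemma ssf_sgn (R : realType) m (s : nat -> R) i : ssf m s (sgn m i) = - ssf m s i.
Proof.
rewrite /ssf; case: (ltnP i (2 * m)) => h.
  case: (sgn_in h) => -> -> -> *.
  by case: (odd i) => //=; rewrite opprK.
by rewrite sgn_out' // ?oppr0 // ltnNge h.
Qed.

Lemma ccss1 (R : realType) m (c s : nat -> R) i :
  (forall j, (j < m)%N -> c j ^+ 2 + s j ^+ 2 = 1) ->
  ccf m c i ^+ 2 + ssf m s i ^+ 2 = 1.
Proof.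
move=> h; rewrite /ccf /ssf; case: ifP => hi.
  have hj : (i./2 < m)%N by lia.
  by case: (odd i); rewrite ?sqrrN h.
by rewrite expr1n expr0n addr0.
Qed.

Lemma blockA_E (R : realType) m (b : bool) (c s : nat -> R) (i k : 'I_(2 * m + b)) :
  blockA m b c s i k =
  ccf m c i * ((i : nat) == k)%:R + ssf m s i * ((k : nat) == sgn m i)%:R.
Proof.
rewrite mxE /ccf /ssf.
case: (ltnP i (2 * m)) => hi; case: (ltnP k (2 * m)) => hk /=.
- case: (sgn_in hi) => h1 h2 h3 h4 h5.
  case: (@eqP _ i./2 k./2) => hd.
    case: (@eqP _ (i : nat) k) => hik.
      have -> : ((k : nat) == sgn m i) = false by apply/negbTE; rewrite -hik eq_sym.
      by rewrite mulr1 mulr0 addr0.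
    have -> : ((k : nat) == sgn m i) by apply/eqP; rewrite /sgn hi; case: ifP; lia.
    by rewrite mulr0 add0r mulr1; case: (odd i).
  have -> : ((i : nat) == k) = false by apply/eqP => e; apply: hd; rewrite e.
  have -> : ((k : nat) == sgn m i) = false by apply/eqP => e; apply: hd; rewrite e h2.
  by rewrite !mulr0 addr0.
- have -> : ((i : nat) == k) = false by apply/eqP; lia.
  case: (sgn_in hi) => h1 *.
  have -> : ((k : nat) == sgn m i) = false by apply/eqP; lia.
  by rewrite !mulr0 addr0.
- have -> : ((i : nat) == k) = false by apply/eqP; lia.
  by rewrite !mul0r mulr0 addr0.
- by rewrite sgn_out' // mul1r mul0r addr0; case: eqP.
Qed.

Lemma sum_delta (R : realType) n (f : 'I_n -> R) (j : 'I_n) :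
  \sum_(k < n) ((k : nat) == j)%:R * f k = f j.
Proof.
rewrite (bigD1 j) //= eqxx mul1r big1 ?addr0 // => k hk.
by rewrite val_eqE (negbTE hk) mul0r.
Qed.

Lemma Amul (R : realType) m (b : bool) (c s : nat -> R) (x : 'cV[R]_(2 * m + b)) i :
  (blockA m b c s *m x) i 0 = ccf m c i * x i 0 + ssf m s i * x (sgo i) 0.
Proof.
rewrite mxE.
rewrite (eq_bigr (fun k : 'I_(2 * m + b) => ccf m c i * (((k : nat) == i)%:R * x k 0) +
    ssf m s i * (((k : nat) == sgo i)%:R * x k 0))); last first.
  by move=> k _; rewrite blockA_E [((i : nat) == k)]eq_sym /=; ring.
by rewrite big_split /= -!mulr_sumr (sum_delta _ i) (sum_delta _ (sgo i)).
Qed.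

Lemma AmulT (R : realType) m (b : bool) (c s : nat -> R) (x : 'cV[R]_(2 * m + b)) i :
  ((blockA m b c s)^T *m x) i 0 = ccf m c i * x i 0 - ssf m s i * x (sgo i) 0.
Proof.
rewrite mxE.
rewrite (eq_bigr (fun k : 'I_(2 * m + b) => ((k : nat) == i)%:R * (ccf m c k * x k 0) +
    ((k : nat) == sgo i)%:R * (ssf m s k * x k 0))); last first.
  move=> k _; rewrite mxE blockA_E.
  have -> : ((i : nat) == sgn m k) = ((k : nat) == sgo i).
    rewrite /=; apply/eqP/eqP => [->|->]; by rewrite sgnK.
  ring.
rewrite big_split /= (sum_delta (fun k => ccf m c k * x k 0) i) (sum_delta (fun k => ssf m s k * x k 0) (sgo i)) /= ssf_sgn; ring.
Qed.

Lemma AmulB (R : realType) m (b : bool) (c s : nat -> R) (x : 'cV[R]_(2 * m + b)) (a : R) i :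
  ((blockA m b c s - a%:M) *m x) i 0 = (ccf m c i - a) * x i 0 + ssf m s i * x (sgo i) 0.
Proof.
rewrite mulmxBl mul_scalar_mx !mxE; have := @Amul _ m b c s x i; rewrite mxE => ->; ring.
Qed.

Lemma AmulTB (R : realType) m (b : bool) (c s : nat -> R) (x : 'cV[R]_(2 * m + b)) (a : R) i :
  (((blockA m b c s)^T - a%:M) *m x) i 0 =
  (ccf m c i - a) * x i 0 + (fun j => - ssf m s j) i * x (sgo i) 0.
Proof.
rewrite mulmxBl mul_scalar_mx !mxE; have := @AmulT _ m b c s x i; rewrite mxE => ->; rewrite /=; ring.
Qed.

Lemma rayleighE (R : realType) m (b : bool) (c s : nat -> R) (x : 'cV[R]_(2 * m + b)) :
  rayleigh (blockA m b c s) x = \sum_(i < 2 * m + b) ccf m c i * x i 0 ^+ 2.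
Proof.
rewrite /rayleigh -mulmxA mxE.
rewrite (eq_bigr (fun i : 'I_(2 * m + b) => ccf m c i * x i 0 ^+ 2 +
    (fun _ => 1) i * ssf m s i * x i 0 * x (sgo i) 0)); last first.
  by move=> i _; rewrite mxE Amul ; ring.
rewrite big_split /= (@sum_cross0 _ _ (@sgo m b) xpredT (fun _ => 1)) ?addr0 //.
- exact: sgoK.
- by move=> i; rewrite /= ssf_sgn.
Qed.

Definition nrm2 (R : realType) n (x : 'cV[R]_n) : R := \sum_(i < n) x i 0 ^+ 2.
Definition pm (R : realType) n (x : 'cV[R]_n) : R := \sum_(i < n | (i < 2)%N) x i 0 ^+ 2.
Definition qm (R : realType) n (x : 'cV[R]_n) : R := \sum_(i < n | ~~ (i < 2)%N) x i 0 ^+ 2.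

Lemma nrm2_pq (R : realType) n (x : 'cV[R]_n) : nrm2 x = pm x + qm x.
Proof. by rewrite /nrm2 (bigID (fun i : 'I_n => (i < 2)%N)). Qed.

Lemma pm_ge0 (R : realType) n (x : 'cV[R]_n) : 0 <= pm x.
Proof. by apply: sumr_ge0 => i _; rewrite sqr_ge0. Qed.
Lemma qm_ge0 (R : realType) n (x : 'cV[R]_n) : 0 <= qm x.
Proof. by apply: sumr_ge0 => i _; rewrite sqr_ge0. Qed.
Lemma nrm2_ge0 (R : realType) n (x : 'cV[R]_n) : 0 <= nrm2 x.
Proof. by apply: sumr_ge0 => i _; rewrite sqr_ge0. Qed.

Lemma enormE (R : realType) n (x : 'cV[R]_n) : enorm x = Num.sqrt (nrm2 x).
Proof. by []. Qed.

Lemma enorm_sq (R : realType) n (x : 'cV[R]_n) : enorm x ^+ 2 = nrm2 x.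
Proof. by rewrite enormE sqr_sqrtr // nrm2_ge0. Qed.

Lemma sumP_normalize (R : realType) n (P : pred 'I_n) (x : 'cV[R]_n) :
  \sum_(i | P i) normalize x i 0 ^+ 2 = (\sum_(i | P i) x i 0 ^+ 2) / nrm2 x.
Proof.
rewrite [RHS]mulrC mulr_sumr; apply: eq_bigr => i _.
by rewrite /normalize mxE exprMn exprVn enorm_sq mulrC.
Qed.

Lemma sgn_lt2 m i : (sgn m i < 2)%N = (i < 2)%N.
Proof.
case: (ltnP i (2 * m)) => h.
  by case: (sgn_in h) => _ h2 *; lia.
by rewrite sgn_out'.
Qed.

Lemma sumM_sq (R : realType) m (b : bool) (c : nat -> R) (e : nat -> R)
    (Mf : R -> 'M[R]_(2 * m + b)) (P : pred 'I_(2 * m + b)) (x : 'cV[R]_(2 * m + b)) (a : R) :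
  (forall (x : 'cV[R]_(2 * m + b)) (a : R) (i : 'I_(2 * m + b)),
      (Mf a *m x) i 0 = (ccf m c i - a) * x i 0 + e i * x (sgo i) 0) ->
  (forall i, e (sgn m i) = - e i) ->
  (forall i : nat, ccf m c i ^+ 2 + e i ^+ 2 = 1) ->
  (forall i, P (sgo i) = P i) ->
  \sum_(i | P i) (Mf a *m x) i 0 ^+ 2 = \sum_(i | P i) (1 - 2 * a * ccf m c i + a ^+ 2) * x i 0 ^+ 2.
Proof.
move=> hF he h1 hP.
rewrite (eq_bigr (fun i : 'I_(2 * m + b) => ((ccf m c i - a) * x i 0 + e i * x (sgo i) 0) ^+ 2)); last first.
  by move=> i _; rewrite hF.
apply: (@sum_sq _ _ (@sgo m b) P (fun i => ccf m c i) (fun i => e i) (fun i => x i 0) a).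
- exact: sgoK.
- exact: hP.
- by move=> i; rewrite /= ccf_sgn.
- by move=> i; rewrite /= he.
- by move=> i; rewrite h1.
Qed.

Lemma half_step (R : realType) m (b : bool) (c : nat -> R) (e : nat -> R)
    (Mf : R -> 'M[R]_(2 * m + b)) (c0 c1 : R) (x : 'cV[R]_(2 * m + b)) (a : R) :
  (forall (x : 'cV[R]_(2 * m + b)) (a : R) (i : 'I_(2 * m + b)),
      (Mf a *m x) i 0 = (ccf m c i - a) * x i 0 + e i * x (sgo i) 0) ->
  (forall i, e (sgn m i) = - e i) ->
  (forall i : nat, ccf m c i ^+ 2 + e i ^+ 2 = 1) ->
  (forall i : 'I_(2 * m + b), (i < 2)%N -> ccf m c i = c0) ->
  (forall i : 'I_(2 * m + b), ~~ (i < 2)%N -> c1 <= ccf m c i) ->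
  0 < c0 -> c0 < c1 -> c1 <= 1 ->
  nrm2 x = 1 -> 0 < pm x -> c0 <= a -> a <= 1 ->
  nrm2 (normalize (Mf a *m x)) = 1 /\ 0 < pm (normalize (Mf a *m x)) /\
  qm (normalize (Mf a *m x)) / pm (normalize (Mf a *m x)) <=
     (1 - c0 * (c1 - c0)) * (qm x / pm x).
Proof.
move=> hF he h1 hc0 hc1 c0p c01 c11 nx px ca a1.
set y := Mf a *m x.
set D := 1 - 2 * a * c0 + a ^+ 2.
have Dp : 0 < D by rewrite /D; nra.
have py : pm y = D * pm x.
  rewrite /pm /y (@sumM_sq _ m b c e Mf _ x a hF he h1); last by move=> i; rewrite sgn_lt2.
  rewrite mulr_sumr; apply: eq_bigr => i hi; by rewrite hc0.
have qy : qm y <= (1 - 2 * a * c1 + a ^+ 2) * qm x.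
  rewrite /qm /y (@sumM_sq _ m b c e Mf _ x a hF he h1); last by move=> i; rewrite sgn_lt2.
  rewrite mulr_sumr; apply: ler_sum => i hi; apply: ler_wpM2r; first exact: sqr_ge0.
  have := hc1 i hi; nra.
have pyp : 0 < pm y by rewrite py mulr_gt0.
have ny : 0 < nrm2 y by rewrite nrm2_pq; have := qm_ge0 y; lra.
have ny0 : nrm2 y != 0 by rewrite gt_eqF.
have Ep : forall P : pred 'I_(2 * m + b),
    \sum_(i | P i) normalize y i 0 ^+ 2 = (\sum_(i | P i) y i 0 ^+ 2) / nrm2 y.
  by move=> P; rewrite sumP_normalize.
have pz : pm (normalize y) = pm y / nrm2 y by rewrite /pm Ep.
have qz : qm (normalize y) = qm y / nrm2 y by rewrite /qm Ep.
have nz : nrm2 (normalize y) = 1 by rewrite /nrm2 Ep divff.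
split => //; split; first by rewrite pz divr_gt0.
rewrite pz qz.
have -> : qm y / nrm2 y / (pm y / nrm2 y) = qm y / pm y.
  by field; rewrite ny0 /= gt_eqF.
rewrite ler_pdivrMr //.
have -> : (1 - c0 * (c1 - c0)) * (qm x / pm x) * pm y = (1 - c0 * (c1 - c0)) * D * qm x.
  by rewrite py; field; rewrite gt_eqF.
apply: (le_trans qy); apply: ler_wpM2r; first exact: qm_ge0.
have hD2 : D <= 2 by rewrite /D; nra.
have hcd : c0 * D <= 2 * a by nra.
rewrite /D in hD2 hcd *; nra.
Qed.

Lemma rayleigh_bounds (R : realType) m (b : bool) (c s : nat -> R) (c0 : R) (x : 'cV[R]_(2 * m + b)) :
  (forall i : 'I_(2 * m + b), c0 <= ccf m c i /\ ccf m c i <= 1) ->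
  nrm2 x = 1 -> c0 <= rayleigh (blockA m b c s) x /\ rayleigh (blockA m b c s) x <= 1.
Proof.
move=> hcb nx; rewrite rayleighE; split.
  rewrite -[c0]mulr1 -nx /nrm2 mulr_sumr; apply: ler_sum => i _.
  by apply: ler_wpM2r; [exact: sqr_ge0 | case: (hcb i)].
rewrite -nx /nrm2; apply: ler_sum => i _.
rewrite -[X in _ <= X]mul1r; apply: ler_wpM2r; [exact: sqr_ge0 | by case: (hcb i)].
Qed.

Lemma full_step (R : realType) m (b : bool) (c s : nat -> R) (c0 c1 : R) (x : 'cV[R]_(2 * m + b)) :
  (forall i : nat, ccf m c i ^+ 2 + ssf m s i ^+ 2 = 1) ->
  (forall i : 'I_(2 * m + b), c0 <= ccf m c i /\ ccf m c i <= 1) ->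
  (forall i : 'I_(2 * m + b), (i < 2)%N -> ccf m c i = c0) ->
  (forall i : 'I_(2 * m + b), ~~ (i < 2)%N -> c1 <= ccf m c i) ->
  0 < c0 -> c0 < c1 -> c1 <= 1 ->
  nrm2 x = 1 -> 0 < pm x ->
  nrm2 (aci_step (blockA m b c s) x) = 1 /\ 0 < pm (aci_step (blockA m b c s) x) /\
  qm (aci_step (blockA m b c s) x) / pm (aci_step (blockA m b c s) x) <=
     (1 - c0 * (c1 - c0)) ^+ 2 * (qm x / pm x).
Proof.
move=> h1 hcb hc0 hc1 c0p c01 c11 nx px.
have [a0 a1] := rayleigh_bounds s hcb nx.
have hF1 : forall (x : 'cV[R]_(2 * m + b)) (a : R) (i : 'I_(2 * m + b)),
    ((fun a => blockA m b c s - a%:M) a *m x) i 0 =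
    (ccf m c i - a) * x i 0 + ssf m s i * x (sgo i) 0.
  by move=> y a i; rewrite /= AmulB.
have hF2 : forall (x : 'cV[R]_(2 * m + b)) (a : R) (i : 'I_(2 * m + b)),
    ((fun a => (blockA m b c s)^T - a%:M) a *m x) i 0 =
    (ccf m c i - a) * x i 0 + (fun j => - ssf m s j) i * x (sgo i) 0.
  by move=> y a i; rewrite /= AmulTB.
have [n1 [p1 r1]] := half_step hF1 (@ssf_sgn R m s) h1 hc0 hc1 c0p c01 c11 nx px a0 a1.
rewrite /= in n1 p1 r1.
set w := normalize _ in n1 p1 r1.
have [b0 b1] := rayleigh_bounds s hcb n1.
have he2 : forall i, (fun j => - ssf m s j) (sgn m i) = - (fun j => - ssf m s j) i.
  by move=> i; rewrite /= ssf_sgn.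
have h2 : forall i : nat, ccf m c i ^+ 2 + (fun j => - ssf m s j) i ^+ 2 = 1.
  by move=> i; rewrite /= sqrrN h1.
have [n2 [p2 r2]] := half_step hF2 he2 h2 hc0 hc1 c0p c01 c11 n1 p1 b0 b1.
rewrite /= in n2 p2 r2.
rewrite /aci_step /= -/w.
split => //; split => //.
apply: (le_trans r2); rewrite expr2 -mulrA; apply: ler_wpM2l => //.
have : 0 <= 1 - c0 * (c1 - c0) by nra.
by [].
Qed.

Lemma iter_bound (R : realType) m (b : bool) (c s : nat -> R) (c0 c1 : R) (v0 : 'cV[R]_(2 * m + b)) :
  (forall i : nat, ccf m c i ^+ 2 + ssf m s i ^+ 2 = 1) ->
  (forall i : 'I_(2 * m + b), c0 <= ccf m c i /\ ccf m c i <= 1) ->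
  (forall i : 'I_(2 * m + b), (i < 2)%N -> ccf m c i = c0) ->
  (forall i : 'I_(2 * m + b), ~~ (i < 2)%N -> c1 <= ccf m c i) ->
  0 < c0 -> c0 < c1 -> c1 <= 1 ->
  nrm2 v0 = 1 -> 0 < pm v0 -> forall k,
  nrm2 (aci_v (blockA m b c s) v0 k) = 1 /\ 0 < pm (aci_v (blockA m b c s) v0 k) /\
  qm (aci_v (blockA m b c s) v0 k) / pm (aci_v (blockA m b c s) v0 k) <=
     ((1 - c0 * (c1 - c0)) ^+ 2) ^+ k * (qm v0 / pm v0).
Proof.
move=> h1 hcb hc0 hc1 c0p c01 c11 nx px; elim => [|k [nk [pk rk]]].
  by rewrite /aci_v /= expr0 mul1r.
have [n' [p' r']] := full_step h1 hcb hc0 hc1 c0p c01 c11 nk pk.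
rewrite /aci_v iterS -/(aci_v _ _ k); split => //; split => //.
apply: (le_trans r'); rewrite [_ ^+ k.+1]exprS -mulrA; apply: ler_wpM2l => //.
exact: sqr_ge0.
Qed.

Lemma cvg_sumR (R : realType) n (P : pred 'I_n) (u : 'I_n -> nat -> R) (l : 'I_n -> R) :
  (forall i, u i k @[k --> \oo] --> l i) ->
  (\sum_(i | P i) u i k) @[k --> \oo] --> \sum_(i | P i) l i.
Proof.
move=> h.
have -> : (fun k => \sum_(i | P i) u i k) = \sum_(i | P i) u i by rewrite fct_sumE.
apply: (big_rec2 (fun (f : nat -> R) (l : R) => f @ \oo --> l)).
  exact: cvg_cst.
by move=> i f y _ hf; apply: cvgD.
Qed.

Lemma sup_eq (R : realType) (S : set R) (r0 : R) : S r0 -> ubound S r0 -> sup S = r0.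
Proof.
move=> hS hub; apply/le_anti/andP; split.
  by apply: ge_sup => //; exists r0.
by apply: ub_le_sup => //; exists r0.
Qed.

Theorem mainTheorem14 (R : realType) (m : nat) (b : bool) (c s : nat -> R)
    (v0 vstar : 'cV[R]_(2 * m + b)) :
  (1 <= m)%N ->
  (forall j, (j < m)%N -> c j ^+ 2 + s j ^+ 2 = 1) ->
  (forall j, (j < m)%N -> s j != 0) ->
  0 < c 0%N ->
  (forall j, (j.+1 < m)%N -> c j < c j.+1) ->
  c m.-1 < 1 ->
  enorm v0 = 1 ->
  (exists d, grade (blockA m b c s) v0 d /\ (2 <= d)%N) ->
  (exists i : 'I_(2 * m + b), (i < 2)%N /\ v0 i 0 != 0) ->
  (forall i j, (fun k => aci_v (blockA m b c s) v0 k i j) @ \oo --> vstar i j) ->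
  let A := blockA m b c s in
  (forall alpha : R, opnorm (A - (c 0%N)%:M) <= opnorm (A - alpha%:M)) /\
  opnorm (A - (c 0%N)%:M) = enorm (A *m vstar - c 0%N *: vstar) /\
  enorm (A *m vstar - c 0%N *: vstar) = Num.sqrt (1 - c 0%N ^+ 2).
Proof.
move=> hm hcs _ hc0p hinc hlast nv0 _ [i0 [hi0 hv0]] hlim A.
set c0 := c 0%N.
set c1 := if (1 < m)%N then c 1%N else 1.
have mono : forall j k, (j <= k)%N -> (k < m)%N -> c j <= c k.
  move=> j k; elim: k => [|k IH] hjk hk.
    by rewrite leqn0 in hjk; move/eqP: hjk => ->.
  rewrite leq_eqVlt in hjk; case/orP: hjk => [/eqP -> //| hjk].
  apply: (le_trans (IH _ _)); [lia | lia | apply: ltW; apply: hinc; lia].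
have hcl1 : forall j, (j < m)%N -> c j < 1.
  move=> j hj; apply: (le_lt_trans _ hlast); apply: mono; lia.
have hc0le : forall j, (j < m)%N -> c0 <= c j by move=> j hj; apply: mono.
have hcb : forall i : 'I_(2 * m + b), c0 <= ccf m c i /\ ccf m c i <= 1.
  move=> i; rewrite /ccf; case: ifP => h.
    have hj : (i./2 < m)%N by lia.
    by split; [exact: hc0le | exact: ltW (hcl1 _ hj)].
  by split => //; exact: ltW (hcl1 _ hm).
have hc0 : forall i : 'I_(2 * m + b), (i < 2)%N -> ccf m c i = c0.
  move=> i hi; rewrite /ccf; have -> : (i < 2 * m)%N by lia.
  by have -> : (i./2 = 0)%N by lia.
have hc1 : forall i : 'I_(2 * m + b), ~~ (i < 2)%N -> c1 <= ccf m c i.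
  move=> i hi; rewrite /ccf /c1; case: (boolP (i < 2 * m)%N) => h.
    have hm1 : (1 < m)%N by lia.
    rewrite hm1; apply: mono; lia.
  by case: ifP => hm1 //; exact: ltW (hcl1 _ hm1).
have c0p : 0 < c0 by [].
have c01 : c0 < c1.
  by rewrite /c1; case: ifP => hm1; [exact: hinc | exact: hcl1].
have c11 : c1 <= 1.
  by rewrite /c1; case: ifP => hm1 //; exact: ltW (hcl1 _ hm1).
have c0lt1 : c0 < 1 by exact: hcl1.
have h1 : forall i : nat, ccf m c i ^+ 2 + ssf m s i ^+ 2 = 1 by move=> i; apply: ccss1.
have nx0 : nrm2 v0 = 1 by rewrite -enorm_sq nv0 expr1n.
have px0 : 0 < pm v0.
  rewrite /pm (bigD1 i0) //=.
  have : 0 <= \sum_(i < 2 * m + b | (i < 2)%N && (i != i0)) v0 i 0 ^+ 2.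
    by apply: sumr_ge0 => i _; exact: sqr_ge0.
  have : 0 < v0 i0 0 ^+ 2 by rewrite lt_def sqrf_eq0 hv0 sqr_ge0.
  lra.
set K := qm v0 / pm v0.
set th := 1 - c0 * (c1 - c0).
have IT := iter_bound h1 hcb hc0 hc1 c0p c01 c11 nx0 px0.
rewrite -/th -/K in IT.
have thp : 0 < th by rewrite /th; nra.
have th1 : th < 1 by rewrite /th; nra.
have qk : forall k, qm (aci_v A v0 k) <= (th ^+ 2) ^+ k * K.
  move=> k; have [nk [pk rk]] := IT k; apply: le_trans rk.
  rewrite ler_pdivlMr //.
  have := nrm2_pq (aci_v A v0 k); have := qm_ge0 (aci_v A v0 k); rewrite nk => hq hpq.
  nra.
have rho_lt : `|th ^+ 2| < 1.
  by rewrite ger0_norm ?sqr_ge0 //; nra.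
have glim : (th ^+ 2) ^+ k * K @[k --> \oo] --> 0.
  have H := cvgM (cvg_expr rho_lt) (cvg_cst K); rewrite mul0r in H; exact: H.
have vz : forall i : 'I_(2 * m + b), ~~ (i < 2)%N -> vstar i 0 = 0.
  move=> i hi.
  have hsq : vstar i 0 * vstar i 0 <= 0.
    apply: (ler_cvg_to (cvgM (hlim i 0) (hlim i 0)) glim).
    apply: nearW => k /=; rewrite -expr2; apply: le_trans (qk k).
    rewrite /qm (bigD1 i) //= lerDl; apply: sumr_ge0 => j _; exact: sqr_ge0.
  have : vstar i 0 ^+ 2 = 0 by apply/le_anti; rewrite expr2 hsq -expr2 sqr_ge0.
  by move/eqP; rewrite sqrf_eq0 => /eqP.
have nstar : nrm2 vstar = 1.
  have cv : forall i, aci_v A v0 k i 0 * aci_v A v0 k i 0 @[k --> \oo] --> vstar i 0 * vstar i 0.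
    by move=> i; apply: cvgM; apply: hlim.
  have H := @cvg_sumR R _ xpredT (fun i k => aci_v A v0 k i 0 * aci_v A v0 k i 0)
      (fun i => vstar i 0 * vstar i 0) cv.
  have E : (fun k => \sum_(i | xpredT i) aci_v A v0 k i 0 * aci_v A v0 k i 0) = fun _ => 1.
    apply: funext => k; have [nk _] := IT k; rewrite -nk /nrm2.
    by apply: eq_bigr => i _; rewrite expr2.
  rewrite E in H.
  have -> : nrm2 vstar = \sum_(i | xpredT i) vstar i 0 * vstar i 0.
    by apply: eq_bigr => i _; rewrite expr2.
  apply/le_anti/andP; split.
    by apply: (ler_cvg_to H (cvg_cst (1 : R))); apply: nearW => x.
  by apply: (ler_cvg_to (cvg_cst (1 : R)) H); apply: nearW => x.
have qstar : qm vstar = 0 by rewrite /qm big1 // => i hi; rewrite vz // expr0n.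
have pstar : pm vstar = 1 by have := nrm2_pq vstar; rewrite qstar addr0 nstar.
have hF1 : forall (x : 'cV[R]_(2 * m + b)) (a : R) (i : 'I_(2 * m + b)),
    ((fun a => A - a%:M) a *m x) i 0 =
    (ccf m c i - a) * x i 0 + ssf m s i * x (sgo i) 0.
  by move=> y a i; rewrite /= AmulB.
have sq : forall a x, nrm2 ((A - a%:M) *m x) =
    \sum_(i < 2 * m + b) (1 - 2 * a * ccf m c i + a ^+ 2) * x i 0 ^+ 2.
  move=> a x; have := @sumM_sq _ m b c (ssf m s) (fun a => A - a%:M) xpredT x a hF1
     (@ssf_sgn R m s) h1 (fun i => erefl).
  by rewrite /= => <-.
have key : forall a, nrm2 ((A - a%:M) *m vstar) = 1 - 2 * a * c0 + a ^+ 2.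
  move=> a; rewrite sq (bigID (fun i : 'I_(2 * m + b) => (i < 2)%N)) /=.
  rewrite [X in _ + X]big1 ?addr0; last by move=> i hi; rewrite vz // expr0n mulr0.
  rewrite (eq_bigr (fun i => (1 - 2 * a * c0 + a ^+ 2) * vstar i 0 ^+ 2)); last first.
    by move=> i hi; rewrite hc0.
  by rewrite -mulr_sumr -/(pm vstar) pstar mulr1.
have ev : enorm vstar = 1 by rewrite enormE nstar sqrtr1.
have Mv : A *m vstar - c0 *: vstar = (A - c0%:M) *m vstar by rewrite mulmxBl mul_scalar_mx.
have e3 : enorm (A *m vstar - c0 *: vstar) = Num.sqrt (1 - c0 ^+ 2).
  by rewrite Mv enormE key; congr Num.sqrt; ring.
have op0 : opnorm (A - c0%:M) = Num.sqrt (1 - c0 ^+ 2).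
  apply: sup_eq.
    by exists vstar; split => //; rewrite -e3 Mv.
  move=> r [x [nx ->]]; rewrite enormE ler_sqrt; last by nra.
  have nx2 : nrm2 x = 1 by rewrite -enorm_sq nx expr1n.
  have -> : 1 - c0 ^+ 2 = (1 - c0 ^+ 2) * nrm2 x by rewrite nx2 mulr1.
  rewrite sq /nrm2 mulr_sumr; apply: ler_sum => i _.
  apply: ler_wpM2r; first exact: sqr_ge0.
  have [hl hu] := hcb i; nra.
split; last by split => //; rewrite op0 e3.
move=> a; rewrite op0.
have hub : has_ubound [set r | exists x : 'cV[R]_(2 * m + b), enorm x = 1 /\ r = enorm ((A - a%:M) *m x)].
  exists (Num.sqrt ((1 + `|a|) ^+ 2)).
  move=> r [x [nx ->]]; rewrite enormE ler_sqrt; last exact: sqr_ge0.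
  have nx2 : nrm2 x = 1 by rewrite -enorm_sq nx expr1n.
  have -> : (1 + `|a|) ^+ 2 = (1 + `|a|) ^+ 2 * nrm2 x by rewrite nx2 mulr1.
  rewrite sq /nrm2 mulr_sumr; apply: ler_sum => i _.
  apply: ler_wpM2r; first exact: sqr_ge0.
  have [hl hu] := hcb i.
  have ha1 := ler_norm a.
  have ha2 : - a <= `|a| by rewrite -normrN ler_norm.
  have hh1 : 0 <= (`|a| + a) * ccf m c i by apply: mulr_ge0; lra.
  have hh2 : 0 <= `|a| * (1 - ccf m c i) by apply: mulr_ge0; [exact: normr_ge0 | lra].
  nra.
apply: (le_trans _ (ub_le_sup hub _)); last by exists vstar; split.
have hc2 : c0 * c0 < 1 by nra.
have hac := sqr_ge0 (a - c0).
rewrite enormE key ler_sqrt; last by nra.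
nra.
Qed.
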